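(* Let $L$ be a finite semimodular lattice with exactly two coatoms and $U$ a finite semimodular lattice with exactly two atoms. Then any vertical 2-sum $L +_2 U$ is a semimodular lattice.
   Context: Semimodular means upper semimodular: whenever $s,t \succ s \wedge t$ (covering relations), then $s,t \prec s \vee t$. Let $L' = L \setminus \{\top_L\}$ and $U' = U \setminus \{\bot_U\}$. A vertical 2-sum $L +_2 U$ is the poset obtained from the disjoint union of $L'$ and $U'$ by identifying the two coatoms of $L$ with the two atoms of $U$ via some bijection; $x \le y$ iff $x,y \in L'$ and $x \le_L y$, or $x,y \in U'$ and $x \le_U y$, or $x \in L'$, $y \in U'$ and there is an identified element $c$ with $x \le_L c$ and $c \le_U y$. (This poset is a lattice.) *)

(* Defs.v *)
From HB Require Import structures.
From mathcomp Require Import all_boot all_order.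
Set Implicit Arguments. Unset Strict Implicit. Unset Printing Implicit Defensive.
Import Order.TTheory.
Local Open Scope order_scope.

Definition lt_r (T : eqType) (le : rel T) (x y : T) : bool := (x != y) && le x y.

Definition covers_r (T : finType) (le : rel T) (x y : T) : bool :=
  lt_r le x y && [forall z, ~~ (lt_r le x z && lt_r le z y)].

Definition is_meet_r (T : finType) (le : rel T) (x y m : T) : Prop :=
  [/\ le m x, le m y & forall z, le z x -> le z y -> le z m].
Definition is_join_r (T : finType) (le : rel T) (x y j : T) : Prop :=
  [/\ le x j, le y j & forall z, le x z -> le y z -> le j z].

Definition is_lattice_r (T : finType) (le : rel T) : Prop :=
  [/\ reflexive le, antisymmetric le, transitive le &
      forall x y, (exists m, is_meet_r le x y m) /\ (exists j, is_join_r le x y j)].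

Definition semimodular_r (T : finType) (le : rel T) : Prop :=
  forall s t m j, is_meet_r le s t m -> is_join_r le s t j ->
    covers_r le m s -> covers_r le m t -> covers_r le s j /\ covers_r le t j.

Definition semimodular (d : Order.disp_t) (L : finTBLatticeType d) : Prop :=
  forall s t : L, covers_r (<=%O : rel L) (s `&` t) s ->
                  covers_r (<=%O : rel L) (s `&` t) t ->
    covers_r (<=%O : rel L) s (s `|` t) /\ covers_r (<=%O : rel L) t (s `|` t).

Definition coatom (d : Order.disp_t) (L : finTBLatticeType d) (c : L) : bool :=
  covers_r (<=%O : rel L) c \top.
Definition atom (d : Order.disp_t) (L : finTBLatticeType d) (a : L) : bool :=
  covers_r (<=%O : rel L) \bot a.

Definition Lpart (d : Order.disp_t) (L : finTBLatticeType d) : finType :=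
  {x : L | x != \top}.
(* U' minus the two atoms a1,a2: the atoms of U are represented by the
   coatoms of L they are identified with (c1 ~ a1, c2 ~ a2). *)
Definition Upart (d : Order.disp_t) (U : finTBLatticeType d) (a1 a2 : U) : finType :=
  {y : U | [&& y != \bot, y != a1 & y != a2]}.

(* The order of L +_2 U, where coatom c1 of L is identified with atom a1 of U
   and coatom c2 with atom a2. *)
Definition vsum_le (dL dU : Order.disp_t) (L : finTBLatticeType dL)
  (U : finTBLatticeType dU) (c1 c2 : L) (a1 a2 : U)
  (x y : (Lpart L + Upart a1 a2)%type) : bool :=
  match x, y with
  | inl a, inl b => val a <= val b
  | inr u, inr v => val u <= val v
  | inl a, inr v => ((val a <= c1) && (a1 <= val v)) || ((val a <= c2) && (a2 <= val v))
  | inr _, inl _ => false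
  end.
Arguments vsum_le {dL dU L U} c1 c2 a1 a2 x y.

(* Main.v *)
Require Import Defs.
From mathcomp Require Import all_boot all_order.
Import Order.TTheory.
Local Open Scope order_scope.

Lemma coversP (T : finType) (le : rel T) (x y : T) :
  covers_r le x y <-> [/\ x != y, le x y & forall z, le x z -> le z y -> z = x \/ z = y].
Proof.
rewrite /covers_r /lt_r; split.
  case/andP=> /andP[nxy lxy] /forallP H; split=> // z lxz lzy.
  have := H z; rewrite lxz lzy !andbT.
  case: (eqVneq x z) => [->|nxz]; first by left.
  case: (eqVneq z y) => [->|nzy]; first by right.
  by [].
case=> nxy lxy H; rewrite nxy lxy /=; apply/forallP=> z.
apply/negP=> /andP[/andP[nxz lxz] /andP[nzy lzy]].
by case: (H z lxz lzy) => Ez; [move: nxz; rewrite Ez eqxx | move: nzy; rewrite Ez eqxx].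
Qed.

Lemma exists_cover (T : finType) (le : rel T) :
  reflexive le -> transitive le -> antisymmetric le ->
  forall x t, x != t -> le x t -> exists c, covers_r le c t /\ le x c.
Proof.
move=> rf tr an.
suff H : forall n x t, (#|[pred y | (x != y) && le x y]| <= n)%N -> x != t -> le x t ->
   exists c, covers_r le c t /\ le x c.
  by move=> x t; apply: (H _ x t (leqnn _)).
elim=> [|n IH] x t.
  move=> Hc nxt lxt.
  have : (0 < #|[pred y | (x != y) && le x y]|)%N by apply/card_gt0P; exists t; rewrite inE nxt lxt.
  by rewrite leqn0 in Hc; rewrite (eqP Hc).
move=> Hc nxt lxt.
case: (boolP (covers_r le x t)) => [cv|ncv]; first by exists x; split=> //; apply: rf.
have [z [lxz lzt nzx nzt]] : exists z, [/\ le x z, le z t, z != x & z != t].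
  move: ncv; rewrite /covers_r /lt_r nxt lxt /= => /forallPn[z].
  rewrite negbK => /andP[/andP[nxz lxz] /andP[nzt lzt]].
  by exists z; split=> //; rewrite eq_sym.
have [c [cc lzc]] : exists c, covers_r le c t /\ le z c.
  apply: (IH z t) => //.
  rewrite -ltnS; apply: leq_trans Hc; apply: proper_card; apply/properP; split.
    apply/subsetP=> y; rewrite !inE => /andP[nzy lzy]; rewrite (tr z) // andbT.
    apply/eqP=> Exy; move: nzx => /eqP; apply; apply: an.
    by rewrite lxz; rewrite -Exy in lzy; rewrite lzy.
  by exists z; rewrite !inE ?eqxx //= eq_sym nzx lxz.
by exists c; split=> //; apply: (tr z).
Qed.
Arguments coversP {T le x y}.
Arguments exists_cover {T le}.

Ltac bsolve := simpl; repeat match goal with |- context [ @Order.le ?d ?T ?x ?y ] => case: (@Order.le d T x y) end; simpl; intros; try discriminate; try done.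

Theorem lemma3p5 (dL dU : Order.disp_t) (L : finTBLatticeType dL)
  (U : finTBLatticeType dU) (c1 c2 : L) (a1 a2 : U) :
  semimodular L -> semimodular U ->
  c1 != c2 -> coatom c1 -> coatom c2 -> (forall c : L, coatom c -> c = c1 \/ c = c2) ->
  a1 != a2 -> atom a1 -> atom a2 -> (forall a : U, atom a -> a = a1 \/ a = a2) ->
  is_lattice_r (vsum_le c1 c2 a1 a2) /\ semimodular_r (vsum_le c1 c2 a1 a2).
Proof.
move=> smL smU c12n cc1 cc2 call a12n aa1 aa2 aall.
have /coversP[c1T _ cov1] := cc1.
have /coversP[c2T _ cov2] := cc2.
have /coversP[a1B _ ava1] := aa1.
have /coversP[a2B _ ava2] := aa2.
have c12 : (c1 <= c2) = false.
  apply/negbTE/negP => h; case: (cov1 c2 h (lex1 _)) => E.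
    by move: c12n; rewrite E eqxx.
  by move: c2T; rewrite E eqxx.
have c21 : (c2 <= c1) = false.
  apply/negbTE/negP => h; case: (cov2 c1 h (lex1 _)) => E.
    by move: c12n; rewrite E eqxx.
  by move: c1T; rewrite E eqxx.
have a12 : (a1 <= a2) = false.
  apply/negbTE/negP => h; case: (ava2 a1 (le0x _) h) => E.
    by move: a1B; rewrite E eqxx.
  by move: a12n; rewrite E eqxx.
have a21 : (a2 <= a1) = false.
  apply/negbTE/negP => h; case: (ava1 a2 (le0x _) h) => E.
    by move: a2B; rewrite eq_sym E eqxx.
  by move: a12n; rewrite E eqxx.
have Lc : forall x : L, x != \top -> (x <= c1) || (x <= c2).
  move=> x xT.
  have [c [cc xc]] := exists_cover (@le_refl _ L) (@le_trans _ L) (@le_anti _ L) _ _ xT (lex1 x).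
  by case: (call c cc) => E; rewrite -E xc ?orbT.
have Ua : forall u : U, u != \bot -> (a1 <= u) || (a2 <= u).
  move=> u uB.
  have rf : reflexive (fun x y : U => y <= x) by move=> x; exact: le_refl.
  have tr : transitive (fun x y : U => y <= x) by move=> y x z h1 h2; exact: le_trans h2 h1.
  have an : antisymmetric (fun x y : U => y <= x) by move=> x y h; apply: le_anti; rewrite andbC.
  have [c [cc uc]] := exists_cover rf tr an _ _ uB (le0x u).
  have ac : atom c.
    move: cc => /coversP[cB bc H]; apply/coversP; split=> //; first by rewrite eq_sym.
    by move=> z h1 h2; case: (H z h2 h1) => E; [right|left].
  by case: (aall c ac) => E; rewrite -E uc ?orbT.
pose UP (w : U) := [&& w != \bot, w != a1 & w != a2].
have Upred : forall (v : Upart a1 a2) (w : U), val v <= w -> UP w.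
  move=> [v /and3P[vB va1 va2]] w /= vw; apply/and3P; split; apply/eqP=> E; rewrite E in vw.
  - by move: vB; rewrite -lex0 vw.
  - by case: (ava1 v (le0x _) vw) => E'; [move: vB | move: va1]; rewrite E' eqxx.
  - by case: (ava2 v (le0x _) vw) => E'; [move: vB | move: va2]; rewrite E' eqxx.
have LP : forall (a : Lpart L) (x : L), x <= val a -> x != \top.
  move=> a x h; apply: contraNneq (valP a) => E; rewrite E in h.
  by rewrite -le1x.
have Tv : forall v : Upart a1 a2, (a1 <= val v) || (a2 <= val v).
  by move=> v; apply: Ua; case/and3P: (valP v).
have Dl : forall a : Lpart L, (val a <= c1) || (val a <= c2).
  by move=> a; apply: Lc; exact: (valP a).
have UP12 : UP (a1 `|` a2).
  apply/and3P; split; apply/eqP => E.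
  - by move: a1B; rewrite eq_sym -lex0 -E leUl.
  - by move: a21; rewrite -E leUr.
  - by move: a12; rewrite -E leUl.
have c12T : c1 `&` c2 != \top.
  by apply/eqP=> E; move: c1T; rewrite -le1x -E leIl.
set le := vsum_le c1 c2 a1 a2.

have rfl : reflexive le by case=> a; rewrite /le /= lexx.
have meetC : forall x y m, is_meet_r le x y m -> is_meet_r le y x m.
  by move=> x y m [h1 h2 h3]; split=> // z hx hy; apply: h3.
have joinC : forall x y m, is_join_r le x y m -> is_join_r le y x m.
  by move=> x y m [h1 h2 h3]; split=> // z hx hy; apply: h3.
have Mlr : forall a v, exists m, is_meet_r le (inl a) (inr v) m.
  move=> a v; case: (boolP (le (inl a) (inr v))) => H.
    exists (inl a); split=> //; case=> [b|w] //= ba _.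
  pose k := if a1 <= val v then c1 else c2.
  exists (inl (exist _ (val a `&` k) (LP a _ (leIl _ _)))); split => /=.
  - exact: leIl.
  - rewrite /k; case: ifP => h; first by rewrite leIr.
    by rewrite leIr; move: h (Tv v); bsolve.
  - case=> [b|w] //= ba hb; rewrite lexI ba /= /k.
    move: H hb (Tv v) (Dl a) => /=.
    by case: ifP; bsolve.

have Muu : forall u v, exists m, is_meet_r le (inr u) (inr v) m.
  move=> u v; pose w := val u `&` val v.
  case: (boolP (UP w)) => Hw.
    exists (inr (exist _ w Hw)); split=> /=; [exact: leIl | exact: leIr |].
    case=> [b|x] /= h1 h2; last by rewrite lexI h1 h2.
    have Tw : (a1 <= w) || (a2 <= w) by apply: Ua; case/and3P: Hw.
    by move: h1 h2 Tw; rewrite /w !lexI; bsolve.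
  have nb : ~~ [&& (a1 <= val u), (a1 <= val v), (a2 <= val u) & (a2 <= val v)].
    apply/negP => /and4P[h1 h2 h3 h4]; move/negP: Hw; apply.
    have g1 : a1 <= w by rewrite lexI h1 h2.
    have g2 : a2 <= w by rewrite lexI h3 h4.
    apply/and3P; split; apply/eqP=> E.
    - by move: a1B; rewrite eq_sym -lex0 -E g1.
    - by move: a21; rewrite -E g2.
    - by move: a12; rewrite -E g1.
  have noU : forall x : Upart a1 a2, val x <= val u -> val x <= val v -> False.
    by move=> x h h'; move/negP: Hw; apply; apply: (Upred x); rewrite lexI h h'.
  case: (boolP ((a1 <= val u) && (a1 <= val v))) => h1.
    exists (inl (exist _ c1 c1T)); split=> /=.
    - by case/andP: h1 => -> _; rewrite lexx.
    - by case/andP: h1 => _ ->; rewrite lexx.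
    case=> [b|x] /= g1 g2; last by case: (noU x g1 g2).
    by move: nb h1 g1 g2; bsolve.
  case: (boolP ((a2 <= val u) && (a2 <= val v))) => h2.
    exists (inl (exist _ c2 c2T)); split=> /=.
    - by case/andP: h2 => -> _; rewrite lexx orbT.
    - by case/andP: h2 => _ ->; rewrite lexx orbT.
    case=> [b|x] /= g1 g2; last by case: (noU x g1 g2).
    by move: nb h1 h2 g1 g2; bsolve.
  exists (inl (exist _ (c1 `&` c2) c12T)); split=> /=.
  - by rewrite leIl leIr; move: (Tv u); bsolve.
  - by rewrite leIl leIr; move: (Tv v); bsolve.
  case=> [b|x] /= g1 g2; last by case: (noU x g1 g2).
  by rewrite lexI; move: nb h1 h2 g1 g2; bsolve.
have Jll : forall a b, exists j, is_join_r le (inl a) (inl b) j.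
  move=> a b; pose j := val a `|` val b.
  case: (eqVneq j \top) => hj.
    have na1 : ~~ ((val a <= c1) && (val b <= c1)).
      by apply/negP=> /andP[h1 h2]; move: c1T; rewrite -le1x -hj leUx h1 h2.
    have na2 : ~~ ((val a <= c2) && (val b <= c2)).
      by apply/negP=> /andP[h1 h2]; move: c2T; rewrite -le1x -hj leUx h1 h2.
    exists (inr (exist _ (a1 `|` a2) UP12)); split=> /=.
    - by rewrite leUl leUr !andbT; apply: Dl.
    - by rewrite leUl leUr !andbT; apply: Dl.
    case=> [z|w] /= h1 h2.
      have hz : j <= val z by rewrite leUx h1 h2.
      by move: (LP z j hz); rewrite hj eqxx.
    by rewrite leUx; move: na1 na2 h1 h2; bsolve.
  exists (inl (exist _ j hj)); split=> /=; [exact: leUl | exact: leUr |].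
  case=> [z|w] /= h1 h2; first by rewrite leUx h1 h2.
  by move: (Lc j hj) h1 h2; rewrite /j !leUx; bsolve.
have Jlr : forall a v, exists j, is_join_r le (inl a) (inr v) j.
  move=> a v.
  pose i := if (val a <= c1) && ((a1 <= val v) || ~~ (val a <= c2)) then a1 else a2.
  exists (inr (exist _ (val v `|` i) (Upred v _ (leUl _ _)))); split=> /=.
  - rewrite /i; case: ifP => hi; rewrite leUr !andbT.
      by case/andP: hi => ->.
    by move: hi (Dl a); bsolve.
  - exact: leUl.
  case=> [z|w] //= h hv.
  have t1 : (a1 <= val v) ==> (a1 <= val w) by apply/implyP => h'; exact: le_trans h' hv.
  have t2 : (a2 <= val v) ==> (a2 <= val w) by apply/implyP => h'; exact: le_trans h' hv.
  rewrite leUx hv /= /i; case: ifP => hi; move: hi h (Dl a) (Tv v) t1 t2; bsolve.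
have Juu : forall u v, exists j, is_join_r le (inr u) (inr v) j.
  move=> u v; exists (inr (exist _ (val u `|` val v) (Upred u _ (leUl _ _)))); split=> /=.
  - exact: leUl.
  - exact: leUr.
  by case=> [z|w] //= h1 h2; rewrite leUx h1 h2.

have Hlat : is_lattice_r le.
  split=> //.
  - move=> [a|a] [b|b]; rewrite /le /= ?andbF // => /andP[h1 h2].
      by congr inl; apply: val_inj; apply: le_anti; rewrite h1 h2.
    by congr inr; apply: val_inj; apply: le_anti; rewrite h1 h2.
  - move=> [b|b] [a|a] [c|c]; rewrite /le /= //.
    + exact: le_trans.
    + move=> ab /orP[/andP[h1 h2]|/andP[h1 h2]]; apply/orP; [left|right];
        by rewrite (le_trans ab h1) h2.
    + move=> /orP[/andP[h1 h2]|/andP[h1 h2]] vw; apply/orP; [left|right];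
        by rewrite h1 (le_trans h2 vw).
    + exact: le_trans.
  - case=> [a|u] [b|v]; split.
    + by exists (inl (exist _ (val a `&` val b) (LP a _ (leIl _ _)))); split=> /=;
        [exact: leIl | exact: leIr | case=> [z|w] //= h1 h2; rewrite lexI h1 h2].
    + exact: Jll.
    + exact: Mlr.
    + exact: Jlr.
    + by have [m hm] := Mlr b u; exists m; apply: meetC.
    + by have [m hm] := Jlr b u; exists m; apply: joinC.
    + exact: Muu.
    + exact: Juu.
split=> //.

have C1 : forall a b : Lpart L, covers_r le (inl a) (inl b) <-> covers_r <=%O (val a) (val b).
  move=> a b; split.
  - move=> /coversP[ne lab H]; apply/coversP; split=> //.
    + move=> z h1 h2; have hz : z != \top := LP b z h2.
      by case: (H (inl (exist _ z hz)) h1 h2) => -[<-]; [left|right].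
  - move=> /coversP[ne lab H]; apply/coversP; split=> //.
    + case=> [z|w] //= h1 h2.
      by case: (H _ h1 h2) => E; [left|right]; congr inl; exact: val_inj.
have C2 : forall u v : Upart a1 a2, covers_r le (inr u) (inr v) <-> covers_r <=%O (val u) (val v).
  move=> u v; split.
  - move=> /coversP[ne lab H]; apply/coversP; split=> //.
    + move=> z h1 h2; have hz : UP z := Upred u z h1.
      by case: (H (inr (exist _ z hz)) h1 h2) => -[<-]; [left|right].
  - move=> /coversP[ne lab H]; apply/coversP; split=> //.
    + case=> [z|w] //= h1 h2.
      by case: (H _ h1 h2) => E; [left|right]; congr inr; exact: val_inj.
have C3f : forall a v, covers_r le (inl a) (inr v) ->
    (val a = c1 /\ covers_r <=%O a1 (val v)) \/ (val a = c2 /\ covers_r <=%O a2 (val v)).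
  move=> a v /coversP[_ h H]; move: h => /= /orP[/andP[ac av]|/andP[ac av]].
  - left; have Ea : val a = c1.
      have hc : le (inl (exist _ c1 c1T)) (inr v) by rewrite /le /= lexx av.
      by case: (H (inl (exist _ _ _)) ac hc) => E; [by case: E => <- | discriminate].
    split=> //; apply/coversP; split=> //.
    + by case/and3P: (valP v) => _ hv _; rewrite eq_sym.
    + move=> z h1 h2; case: (eqVneq z a1) => [->|za]; first by left.
      right; have Uz : UP z.
        apply/and3P; split=> //; apply/eqP => E.
        - by move: a1B; rewrite eq_sym -lex0 -E h1.
        - by move: a12; rewrite -E h1.
      have hz : le (inl a) (inr (exist _ z Uz)) by rewrite /le /= ac h1.
      by case: (H _ hz h2) => E; [discriminate | case: E => <-].
  - right; have Ea : val a = c2.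
      have hc : le (inl (exist _ c2 c2T)) (inr v) by rewrite /le /= lexx av orbT.
      by case: (H (inl (exist _ _ _)) ac hc) => E; [by case: E => <- | discriminate].
    split=> //; apply/coversP; split=> //.
    + by case/and3P: (valP v) => _ _ hv; rewrite eq_sym.
    + move=> z h1 h2; case: (eqVneq z a2) => [->|za]; first by left.
      right; have Uz : UP z.
        apply/and3P; split=> //; apply/eqP => E.
        - by move: a2B; rewrite eq_sym -lex0 -E h1.
        - by move: a21; rewrite -E h1.
      have hz : le (inl a) (inr (exist _ z Uz)) by rewrite /le /= ac h1 orbT.
      by case: (H _ hz h2) => E; [discriminate | case: E => <-].
have C3b : forall a v,
    (val a = c1 /\ covers_r <=%O a1 (val v)) \/ (val a = c2 /\ covers_r <=%O a2 (val v)) ->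
    covers_r le (inl a) (inr v).
  move=> a v [[Ea /coversP[ne av H]]|[Ea /coversP[ne av H]]]; apply/coversP; split=> //=.
  - by rewrite Ea lexx av.
  - case=> [b|w] /= h1 h2.
    + left; congr inl; apply: val_inj; rewrite Ea in h1 *.
      case: (cov1 _ h1 (lex1 _)) => E; first exact: (etrans E (esym Ea)).
      by move: (valP b) => /=; rewrite E eqxx.
    + move: h1; rewrite Ea lexx c12 /= orbF => h1.
      case: (H _ h1 h2) => E; last by right; congr inr; exact: val_inj.
      by move: (valP w) => /=; rewrite E eqxx andbF.
  - by rewrite Ea lexx av orbT.
  - case=> [b|w] /= h1 h2.
    + left; congr inl; apply: val_inj; rewrite Ea in h1 *.
      case: (cov2 _ h1 (lex1 _)) => E; first exact: (etrans E (esym Ea)).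
      by move: (valP b) => /=; rewrite E eqxx.
    + move: h1; rewrite Ea lexx c21 /= => h1.
      case: (H _ h1 h2) => E; last by right; congr inr; exact: val_inj.
      by move: (valP w) => /=; rewrite E eqxx !andbF.
have JU : forall su tu j, is_join_r le (inr su) (inr tu) j ->
    exists2 ju, j = inr ju & val ju = val su `|` val tu.
  move=> su tu [jl|ju] [h1 h2 h3] //; exists ju => //.
  move: h1 h2 => /= h1 h2; apply: le_anti; rewrite leUx h1 h2 !andbT.
  by apply: (h3 (inr (exist _ (val su `|` val tu) (Upred su _ (leUl _ _))))) => /=; [exact: leUl | exact: leUr].
have MU : forall mu su tu, is_meet_r le (inr su) (inr tu) (inr mu) -> val mu = val su `&` val tu.
  move=> mu su tu [h1 h2 h3]; move: h1 h2 => /= h1 h2.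
  have hm : val mu <= val su `&` val tu by rewrite lexI h1 h2.
  apply: le_anti; rewrite hm /=.
  by move: (h3 (inr (exist _ (val su `&` val tu) (Upred mu _ hm)))); rewrite /le /=; apply; [exact: leIl | exact: leIr].
have [cA1 cA2] : covers_r <=%O a1 (a1 `|` a2) /\ covers_r <=%O a2 (a1 `|` a2).
  have E0 : a1 `&` a2 = \bot.
    case: (ava1 (a1 `&` a2) (le0x _) (leIl _ _)) => // E.
    by move: a12; rewrite -E leIr.
  by apply: smU; rewrite E0; [exact: aa1 | exact: aa2].

move=> s t m j hm hj cs ct.
case: m hm cs ct => [ml|mu] hm cs ct; last first.
  case: s hm hj cs => [sl|su] hm hj cs; first by case/coversP: cs.
  case: t hm hj ct => [tl|tu] hm hj ct; first by case/coversP: ct.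
  have E := MU _ _ _ hm.
  move/C2: cs; move/C2: ct; rewrite E => ct cs.
  have [h1 h2] := smU _ _ cs ct.
  have [ju -> Eju] := JU _ _ _ hj.
  by split; apply/C2; rewrite Eju.
case: s hm hj cs => [sl|su] hm hj cs; case: t hm hj ct => [tl|tu] hm hj ct.
- move/C1: cs => cs; move/C1: ct => ct.
  have E : val ml = val sl `&` val tl.
    case: hm => h1 h2 h3; move: h1 h2 => /= h1 h2.
    have hm : val ml <= val sl `&` val tl by rewrite lexI h1 h2.
    apply: le_anti; rewrite hm /=.
    by move: (h3 (inl (exist _ (val sl `&` val tl) (LP sl _ (leIl _ _))))); rewrite /le /=; apply; [exact: leIl | exact: leIr].
  rewrite E in cs ct; have [h1 h2] := smL _ _ cs ct.
  case: (eqVneq (val sl `|` val tl) \top) => hT.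
  + case: hj => j1 j2 j3.
    case: j j1 j2 j3 => [jl|ju] /= j1 j2 j3.
      have hz : val sl `|` val tl <= val jl by rewrite leUx j1 j2.
      by move: (LP jl _ hz); rewrite hT eqxx.
    rewrite hT in h1 h2.
    have Hne : val sl != val tl.
      apply/eqP => Est; move: cs => /coversP[ne _ _]; move: ne; rewrite Est meetxx eqxx.
      by [].
    case: (call _ h1) => Es; case: (call _ h2) => Et.
    * by move: Hne; rewrite Es Et eqxx.
    * have Eju : val ju = a1 `|` a2.
        apply: le_anti; apply/andP; split.
          have k1 : le (inl sl) (inr (exist _ (a1 `|` a2) UP12)) by rewrite /le /= Es lexx leUl.
          have k2 : le (inl tl) (inr (exist _ (a1 `|` a2) UP12)) by rewrite /le /= Et c21 lexx leUr orbT.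
          exact: (j3 (inr (exist _ (a1 `|` a2) UP12)) k1 k2).
        by move: j1 j2; rewrite Es Et !lexx c12 c21 /= ?orbF => j1 j2; rewrite leUx j1 j2.
      by split; apply: C3b; [left|right]; (split; [done | rewrite Eju //]).
    * have Eju : val ju = a1 `|` a2.
        apply: le_anti; apply/andP; split.
          have k1 : le (inl sl) (inr (exist _ (a1 `|` a2) UP12)) by rewrite /le /= Es c21 lexx leUr orbT.
          have k2 : le (inl tl) (inr (exist _ (a1 `|` a2) UP12)) by rewrite /le /= Et lexx leUl.
          exact: (j3 (inr (exist _ (a1 `|` a2) UP12)) k1 k2).
        by move: j1 j2; rewrite Es Et !lexx c12 c21 /= ?orbF => j1 j2; rewrite leUx j1 j2.
      by split; apply: C3b; [right|left]; (split; [done | rewrite Eju //]).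
    * by move: Hne; rewrite Es Et eqxx.
  + case: hj => j1 j2 j3.
    case: j j1 j2 j3 => [jl|ju] /= j1 j2 j3.
      have Ej : val jl = val sl `|` val tl.
        apply: le_anti; rewrite leUx j1 j2 !andbT.
        by move: (j3 (inl (exist _ (val sl `|` val tl) hT))); rewrite /le /=; apply; [exact: leUl | exact: leUr].
      by split; apply/C1; rewrite Ej.
    by move: (j3 (inl (exist _ (val sl `|` val tl) hT)) (leUl _ _) (leUr _ _)).
- exfalso; have [[Em _]|[Em _]] := C3f _ _ ct; move/C1: cs => /coversP[ne ms _];
    rewrite Em in ne ms.
  + case: (cov1 _ ms (lex1 _)) => E; first by move: ne; rewrite E eqxx.
    by move: (valP sl) => /=; rewrite E eqxx.
  + case: (cov2 _ ms (lex1 _)) => E; first by move: ne; rewrite E eqxx.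
    by move: (valP sl) => /=; rewrite E eqxx.
- exfalso; have [[Em _]|[Em _]] := C3f _ _ cs; move/C1: ct => /coversP[ne ms _];
    rewrite Em in ne ms.
  + case: (cov1 _ ms (lex1 _)) => E; first by move: ne; rewrite E eqxx.
    by move: (valP tl) => /=; rewrite E eqxx.
  + case: (cov2 _ ms (lex1 _)) => E; first by move: ne; rewrite E eqxx.
    by move: (valP tl) => /=; rewrite E eqxx.
- have [[Em cs']|[Em cs']] := C3f _ _ cs; have [[Em' ct']|[Em' ct']] := C3f _ _ ct.
  + have Emt : val su `&` val tu = a1.
      move: (cs') (ct') => /coversP[_ g1 _] /coversP[_ g2 _].
      have g : a1 <= val su `&` val tu by rewrite lexI g1 g2.
      apply/eqP; apply: contraT => nE.
      have Uw : UP (val su `&` val tu).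
        apply/and3P; split=> //; apply/eqP => E.
        - by move: a1B; rewrite eq_sym -lex0 -E g.
        - by move: a12; rewrite -E g.
      case: hm => _ _ h3.
      by move: (h3 (inr (exist _ (val su `&` val tu) Uw))); rewrite /le /=; apply; [exact: leIl | exact: leIr].
    have cs2 : covers_r <=%O (val su `&` val tu) (val su) by rewrite Emt.
    have ct2 : covers_r <=%O (val su `&` val tu) (val tu) by rewrite Emt.
    have [h1 h2] := smU _ _ cs2 ct2.
    have [ju -> Eju] := JU _ _ _ hj.
    by split; apply/C2; rewrite Eju.
  + by move: c12n; rewrite -Em -Em' eqxx.
  + by move: c12n; rewrite -Em -Em' eqxx.
  + have Emt : val su `&` val tu = a2.
      move: (cs') (ct') => /coversP[_ g1 _] /coversP[_ g2 _].
      have g : a2 <= val su `&` val tu by rewrite lexI g1 g2.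
      apply/eqP; apply: contraT => nE.
      have Uw : UP (val su `&` val tu).
        apply/and3P; split=> //; apply/eqP => E.
        - by move: a2B; rewrite eq_sym -lex0 -E g.
        - by move: a21; rewrite -E g.
      case: hm => _ _ h3.
      by move: (h3 (inr (exist _ (val su `&` val tu) Uw))); rewrite /le /=; apply; [exact: leIl | exact: leIr].
    have cs2 : covers_r <=%O (val su `&` val tu) (val su) by rewrite Emt.
    have ct2 : covers_r <=%O (val su `&` val tu) (val tu) by rewrite Emt.
    have [h1 h2] := smU _ _ cs2 ct2.
    have [ju -> Eju] := JU _ _ _ hj.
    by split; apply/C2; rewrite Eju.
Qed.
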